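(* Let $X$ and $Y$ be $\mathbb{R}^n$-valued random variables on the same probability space. Suppose $Y$ is centered Gaussian and there are $c_X,C_X>0$ and $m_X\in\mathbb{R}^n$ such that $X$ has a Lebesgue density $p_X$ with $p_X(x)\le C_Xe^{-c_X|x-m_X|^2}$ for all $x\in\mathbb{R}^n$. Then there is $C>0$ such that for each $a\in\mathbb{R}^n$, $$\mathbb{E}\big[e^{-|X-Y-a|^2}\big]\le Ce^{-\frac{c_X}{C}|a-m_X|^2}.$$ *)

(* Defs.v *)
From HB Require Import structures.
From mathcomp Require Import all_boot all_order all_algebra.
From mathcomp Require Import all_classical all_reals all_analysis.
Set Implicit Arguments. Unset Strict Implicit. Unset Printing Implicit Defensive.
Import Order.TTheory GRing.Theory Num.Theory.
Local Open Scope classical_set_scope.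
Local Open Scope ring_scope.

(* R^n is represented by n.-tuple R, with the canonical product (Borel)
   sigma-algebra generated by the coordinate projections. *)

Definition sqdist {R : realType} {n : nat} (x y : n.-tuple R) : R :=
  \sum_(i < n) (tnth x i - tnth y i) ^+ 2.

Definition tsub {R : realType} {n : nat} (x y : n.-tuple R) : n.-tuple R :=
  [tuple tnth x i - tnth y i | i < n].

Definition tdot {R : realType} {n : nat} (u x : n.-tuple R) : R :=
  \sum_(i < n) tnth u i * tnth x i.

(* Integral of a function over R^n w.r.t. n-dimensional Lebesgue measure,
   written as the iterated one-dimensional Lebesgue integral (for nonnegative
   measurable f this equals the integral w.r.t. the product Lebesgue measure
   by Tonelli). *)
Fixpoint lebesgue_nint {R : realType} (n : nat) :
    (n.-tuple R -> \bar R) -> \bar R :=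
  match n return (n.-tuple R -> \bar R) -> \bar R with
  | 0 => fun f => f [tuple]
  | n'.+1 => fun f =>
      (\int[@lebesgue_measure R]_x lebesgue_nint (fun t => f [tuple of x :: t]))%E
  end.

Definition has_lebesgue_density {R : realType} {d : measure_display}
    {Omega : measurableType d} (P : probability Omega R) (n : nat)
    (X : Omega -> n.-tuple R) (p : n.-tuple R -> R) : Prop :=
  measurable_fun setT p /\ (forall x, 0 <= p x) /\
  forall A : set (n.-tuple R), measurable A ->
    P (X @^-1` A) = lebesgue_nint (fun x => (\1_A x * p x)%:E).

Definition centered_gauss1 {R : realType} (s : R) (A : set R) : \bar R :=
  if s == 0 then \d_(0 : R) A else normal_prob 0 s A.

(* Y is a centered Gaussian vector: every linear functional <u, Y> has a
   centered (possibly degenerate) normal distribution. *)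
Definition centered_gaussian {R : realType} {d : measure_display}
    {Omega : measurableType d} (P : probability Omega R) (n : nat)
    (Y : Omega -> n.-tuple R) : Prop :=
  forall u : n.-tuple R, exists2 s : R, 0 <= s &
    forall A : set R, measurable A ->
      P ((fun w => tdot u (Y w)) @^-1` A) = centered_gauss1 s A.

(* Main.v *)
Require Import Defs.
From HB Require Import structures.
From mathcomp Require Import all_boot all_order all_algebra.
From mathcomp Require Import all_classical all_reals all_analysis.
From mathcomp Require Import measurable_realfun ring lra.
Import Order.TTheory GRing.Theory Num.Theory.
Local Open Scope classical_set_scope.
Local Open Scope ring_scope.

Lemma le_int_nonmeas d (T : measurableType d) (R : realType)
  (mu : {measure set T -> \bar R}) (f g : T -> \bar R) :
  (forall x, (0 <= f x)%E) -> (forall x, (f x <= g x)%E) ->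
  (\int[mu]_x f x <= \int[mu]_x g x)%E.
Proof.
move=> f0 fg.
have g0 x : (0 <= g x)%E by apply: le_trans (fg x).
rewrite !ge0_integralTE//.
apply: le_ereal_sup => _ [h /= hf <-]; exists h => //= x.
exact: le_trans (hf x) (fg x).
Qed.

Lemma nint_ge0 (R : realType) n (f : n.-tuple R -> \bar R) :
  (forall x, (0 <= f x)%E) -> (0 <= lebesgue_nint f)%E.
Proof.
elim: n f => [|n IH] f f0 /=; first exact: f0.
by apply: integral_ge0 => x _; apply: IH.
Qed.

Lemma nint_le (R : realType) n (f g : n.-tuple R -> \bar R) :
  (forall x, (0 <= f x)%E) -> (forall x, (f x <= g x)%E) ->
  (lebesgue_nint f <= lebesgue_nint g)%E.
Proof.
elim: n f g => [|n IH] f g f0 fg /=; first exact: fg.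
apply: le_int_nonmeas => x; first by apply: nint_ge0.
by apply: IH.
Qed.
Lemma int_normal_fun (R : realType) (mu s : R) : s != 0 ->
  (\int[@lebesgue_measure R]_x (normal_fun mu s x)%:E = ((normal_peak s)^-1)%:E)%E.
Proof.
move=> s0.
have := integral_normal_pdf mu s; rewrite normal_pdfE//.
under eq_integral do rewrite EFinM.
rewrite ge0_integralZl//; last 3 first.
- by apply/measurable_EFinP; exact: measurable_normal_fun.
- by move=> x _; rewrite lee_fin normal_fun_ge0.
- by rewrite lee_fin normal_peak_ge0.
move=> H.
have p0 : normal_peak s != 0 by rewrite gt_eqF// normal_peak_gt0.
rewrite -[LHS]mul1e -(_ : ((normal_peak s)^-1 * normal_peak s)%:E = 1%E); last first.
  by rewrite mulVf.
by rewrite EFinM -muleA H mule1.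
Qed.

Lemma sqdist_cons (R : realType) n x (t : n.-tuple R) mu (m : n.-tuple R) :
  sqdist [tuple of x :: t] [tuple of mu :: m] = (x - mu)^+2 + sqdist t m.
Proof.
rewrite /sqdist big_ord_recl; congr (_ + _).
by apply: eq_bigr => i _; rewrite !tnthS.
Qed.

Lemma nint_gauss (R : realType) (s : R) : s != 0 ->
  forall n (m : n.-tuple R) (c : R), 0 <= c ->
  lebesgue_nint (fun y => (c * expR (- sqdist y m / (s ^+ 2 *+ 2)))%:E)
  = (c * ((normal_peak s)^-1) ^+ n)%:E.
Proof.
move=> s0; elim=> [|n IH] m c c0 /=.
  by rewrite /sqdist big_ord0 oppr0 mul0r expR0 expr0.
case/tupleP: m => mu m.
transitivity (\int[@lebesgue_measure R]_x
   ((c * ((normal_peak s)^-1) ^+ n)%:E * (normal_fun mu s x)%:E))%E.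
  apply: eq_integral => x _.
  rewrite -EFinM mulrAC -(IH m (c * normal_fun mu s x)); last by rewrite mulr_ge0 ?normal_fun_ge0.
  congr lebesgue_nint; apply/funext => t.
  rewrite sqdist_cons /normal_fun -mulrA -expRD; congr (_ * expR _)%:E.
  by rewrite opprD mulrDl.
rewrite ge0_integralZl//; last 3 first.
- by apply/measurable_EFinP; exact: measurable_normal_fun.
- by move=> x _; rewrite lee_fin normal_fun_ge0.
- by rewrite lee_fin mulr_ge0// exprn_ge0// invr_ge0 normal_peak_ge0.
by rewrite int_normal_fun// -EFinM exprS -mulrA [_ ^+ n * _]mulrC.
Qed.
Lemma measurable_ge_fun d (T : measurableType d) (R : realType) (f : T -> R) (r : R) :
  measurable_fun setT f -> measurable [set x | r <= f x].
Proof.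
move=> mf.
rewrite (_ : [set x | r <= f x] = setT `&` f @^-1` `[r, +oo[%classic).
  exact: mf.
by apply/seteqP; split=> x /=; rewrite in_itv/= andbT // => -[].
Qed.

Lemma measurable_sqdist (R : realType) n (m : n.-tuple R) :
  measurable_fun setT (fun x : n.-tuple R => sqdist x m).
Proof.
rewrite /sqdist; apply: measurable_sum => i.
apply: measurable_funX; apply: measurable_funB => //.
exact: measurable_tnth.
Qed.

Lemma tailX (R : realType) (d : measure_display) (Omega : measurableType d)
  (P : probability Omega R) (n : nat) (X : Omega -> n.-tuple R)
  (cX CX : R) (cX0 : 0 < cX) (CX0 : 0 < CX) (m : n.-tuple R)
  (pX : n.-tuple R -> R) (hdens : has_lebesgue_density P X pX)
  (hbound : forall x, pX x <= CX * expR (- cX * sqdist x m)) (r : R) :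
  (P (X @^-1` [set x | (r <= sqdist x m)%R]) <=
   (CX * expR (- (cX * r / 2)) * ((normal_peak (Num.sqrt cX^-1))^-1) ^+ n)%:E)%E.
Proof.
case: hdens => _ [p0 hd].
have s0 : Num.sqrt cX^-1 != 0 by rewrite gt_eqF// sqrtr_gt0 invr_gt0.
rewrite hd; last first. apply: measurable_ge_fun; exact: measurable_sqdist.
rewrite -(@nint_gauss R _ s0 n m); last by rewrite mulr_ge0 ?expR_ge0// ltW.
apply: nint_le => x.
  by rewrite lee_fin mulr_ge0// indicE; case: (_ \in _).
rewrite lee_fin indicE sqr_sqrtr; last by rewrite invr_ge0 ltW.
case: (boolP (x \in _)) => [|_]; last first.
  by rewrite mul0r mulr_ge0 ?expR_ge0// mulr_ge0 ?expR_ge0// ltW.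
rewrite inE /= => hr; rewrite mul1r (le_trans (hbound x))// -mulrA.
rewrite ler_pM2l// -expRD ler_expR.
have -> : - sqdist x m / (cX^-1 *+ 2) = - (cX * sqdist x m / 2).
  by rewrite -[cX^-1 *+ 2]mulr_natr; field; rewrite gt_eqF.
have : cX * r <= cX * sqdist x m by rewrite ler_pM2l.
lra.
Qed.

Lemma tailG (R : realType) (s S : R) : 0 <= s -> s ^+ 2 < S ->
  exists2 K : R, 0 <= K & forall rho, 0 <= rho ->
    (centered_gauss1 s [set y | (rho <= y ^+ 2)%R] <=
     (K * expR (- (rho / (4 * S))))%:E)%E.
Proof.
move=> s0 sS.
have S0 : 0 < S by apply: le_lt_trans sS; exact: sqr_ge0.
rewrite /centered_gauss1; case: (eqVneq s 0) => [se | sn0]; first subst s.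
  exists 1 => // rho rho0; rewrite diracE mul1r lee_fin.
  case: (boolP (_ \in _)) => [|_]; last by rewrite expR_ge0.
  rewrite inE /= expr0n /= => rho0'.
  have -> : rho = 0 by apply/eqP; rewrite eq_le rho0' rho0.
  by rewrite mul0r oppr0 expR0.
set s' := Num.sqrt (S * 2).
have s'0 : s' != 0 by rewrite gt_eqF// sqrtr_gt0 mulr_gt0.
exists (normal_peak s * (normal_peak s')^-1).
  by rewrite mulr_ge0 ?normal_peak_ge0// invr_ge0 normal_peak_ge0.
move=> rho rho0; rewrite /normal_prob integral_mkcond.
apply: (@le_trans _ _ (\int[@lebesgue_measure R]_x
   ((normal_peak s * expR (- (rho / (4 * S))))%:E * (normal_fun 0 s' x)%:E))%E).
  apply: le_int_nonmeas => x.
    by rewrite patchE; case: ifP => _ //; rewrite lee_fin normal_pdf_ge0.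
  rewrite patchE; case: ifP => [|_]; last first.
    by rewrite -EFinM lee_fin mulr_ge0 ?normal_fun_ge0// mulr_ge0 ?expR_ge0 ?normal_peak_ge0.
  rewrite inE /= => hx.
  rewrite normal_pdfE// -EFinM lee_fin -mulrA ler_pM2l ?normal_peak_gt0//.
  rewrite /normal_fun -expRD ler_expR !subr0 sqr_sqrtr; last by rewrite mulr_ge0// ltW.
  set u := x ^+ 2.
  have hu : rho <= u := hx.
  have u0 : 0 <= u by exact: sqr_ge0.
  have s2 : 0 < s ^+ 2 by rewrite exprn_even_gt0.
  suff : rho / (4 * S) + u / (S * 2 *+ 2) <= u / (s ^+ 2 *+ 2).
    by rewrite !mulNr -opprD lerN2.
  have -> : rho / (4 * S) + u / (S * 2 *+ 2) = (rho + u) / (4 * S).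
    by rewrite -[S * 2 *+ 2]mulr_natr; field; rewrite gt_eqF.
  apply: (@le_trans _ _ (u / (S *+ 2))).
    rewrite -[S *+ 2]mulr_natr ler_pdivrMr ?mulr_gt0//.
    rewrite (_ : u / (S * 2%:R) * (4 * S) = u * 2); last by field; rewrite gt_eqF.
    lra.
  rewrite ler_wpM2l// lef_pV2 ?posrE ?pmulrn_lgt0//.
  by rewrite lerMn2r /= ltW.
rewrite ge0_integralZl//; last 3 first.
- by apply/measurable_EFinP; exact: measurable_normal_fun.
- by move=> x _; rewrite lee_fin normal_fun_ge0.
- by rewrite lee_fin mulr_ge0 ?expR_ge0 ?normal_peak_ge0.
by rewrite int_normal_fun// -EFinM lee_fin mulrAC.
Qed.

Lemma tdot_e (R : realType) n (i : 'I_n) (y : n.-tuple R) :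
  tdot [tuple ((i == j)%:R : R) | j < n] y = tnth y i.
Proof.
rewrite /tdot (bigD1 i) //= tnth_mktuple eqxx mul1r big1 ?addr0 // => j ji.
by rewrite tnth_mktuple eq_sym (negbTE ji) mul0r.
Qed.

Lemma sq3 (R : realType) (u v w : R) : (u - v - w) ^+ 2 <= 3 * (u ^+ 2 + v ^+ 2 + w ^+ 2).
Proof.
rewrite -subr_ge0.
have -> : 3 * (u ^+ 2 + v ^+ 2 + w ^+ 2) - (u - v - w) ^+ 2 =
  (u + v) ^+ 2 + (u + w) ^+ 2 + (v - w) ^+ 2 by ring.
by rewrite !addr_ge0 ?sqr_ge0.
Qed.

Lemma sqdist_ge0 (R : realType) n (x y : n.-tuple R) : 0 <= sqdist x y.
Proof. by apply: sumr_ge0 => i _; exact: sqr_ge0. Qed.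

Lemma pointwise (R : realType) n (x y a m : n.-tuple R) :
  expR (- sqdist (tsub x y) a) <=
  expR (- (sqdist a m / 9)) + ((sqdist a m / 9 <= sqdist x m)%R%:R : R) +
  \sum_(i < n) ((sqdist a m / 9 / n.+1%:R <= tnth y i ^+ 2)%R%:R : R).
Proof.
have key : sqdist a m <=
    3 * (sqdist x m + \sum_(i < n) tnth y i ^+ 2 + sqdist (tsub x y) a).
  rewrite /sqdist -!big_split mulr_sumr; apply: ler_sum => i _ /=.
  rewrite tnth_mktuple.
  have -> : tnth a i - tnth m i = (tnth x i - tnth m i) - tnth y i
     - (tnth x i - tnth y i - tnth a i) by ring.
  exact: sq3.
set r := sqdist a m / 9.
have r0 : 0 <= r by rewrite divr_ge0 ?sqdist_ge0.
have ht : sqdist a m = 9 * r by rewrite /r; field.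
set Dd := sqdist (tsub x y) a.
set A := sqdist x m.
set B := \sum_(i < n) tnth y i ^+ 2.
have Dd0 : 0 <= Dd by exact: sqdist_ge0.
have S0 : 0 <= \sum_(i < n) ((r / n.+1%:R <= tnth y i ^+ 2)%R%:R : R).
  by apply: sumr_ge0 => i _; rewrite ler0n.
have I0 : 0 <= ((r <= A)%R%:R : R) by rewrite ler0n.
have E0 := expR_ge0 (- r).
have [rD|Dr] := leP r Dd.
  have : expR (- Dd) <= expR (- r) by rewrite ler_expR lerN2.
  lra.
have e1 : expR (- Dd) <= 1 by rewrite expR_le1 oppr_le0.
have [rA|Ar] := leP r A.
  have -> : (true%:R : R) = 1 by []. lra.
have -> : (false%:R : R) = 0 by [].
have rB : r < B by move: key; rewrite ht -/A -/B -/Dd; lra.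
have /existsP [i hi] : [exists i, (r / n.+1%:R <= tnth y i ^+ 2)%R].
  apply: contraT; rewrite negb_exists => /forallP hall.
  have : B <= \sum_(i < n) (r / n.+1%:R).
    apply: ler_sum => i _; have := hall i; rewrite -ltNge => /ltW; done.
  rewrite sumr_const card_ord => hB.
  have h2 : r / n.+1%:R *+ n <= r.
    rewrite -mulr_natr mulrAC ler_pdivrMr ?ltr0Sn//.
    by apply: ler_wpM2l => //; rewrite ler_nat.
  by move: (lt_le_trans rB (le_trans hB h2)); rewrite ltxx.
rewrite (bigD1 i) //= hi.
have : 0 <= \sum_(j < n | j != i) ((r / n.+1%:R <= tnth y j ^+ 2)%R%:R : R).
  by apply: sumr_ge0 => j _; rewrite ler0n.
have -> : (true%:R : R) = 1 by [].
lra.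
Qed.

Theorem lemma5p1 (R : realType) (d : measure_display) (Omega : measurableType d)
  (P : probability Omega R) (n : nat) (X Y : Omega -> n.-tuple R)
  (mX : measurable_fun setT X) (mY : measurable_fun setT Y)
  (hY : centered_gaussian P Y)
  (cX CX : R) (cX0 : 0 < cX) (CX0 : 0 < CX) (m : n.-tuple R)
  (pX : n.-tuple R -> R) (hdens : has_lebesgue_density P X pX)
  (hbound : forall x, pX x <= CX * expR (- cX * sqdist x m)) :
  exists2 C : R, 0 < C &
    forall a : n.-tuple R,
      (\int[P]_w (expR (- sqdist (tsub (X w) (Y w)) a))%:E
        <= (C * expR (- (cX / C) * sqdist a m))%:E)%E.
Proof.
pose e := fun i : 'I_n => [tuple ((i == j)%:R : R) | j < n].
have [s hs] : {s : 'I_n -> R & forall i, 0 <= s i /\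
    forall A, measurable A ->
      P ((fun w => tdot (e i) (Y w)) @^-1` A) = centered_gauss1 (s i) A}.
  apply: (@choice _ _ (fun i x => 0 <= x /\ forall A, measurable A ->
      P ((fun w => tdot (e i) (Y w)) @^-1` A) = centered_gauss1 x A)).
  move=> i; have [x x0 hx] := hY (e i); by exists x.
pose S := 1 + \sum_(i < n) s i ^+ 2.
have S1 : 1 <= S by rewrite lerDl sumr_ge0// => i _; exact: sqr_ge0.
have sS i : s i ^+ 2 < S.
  rewrite /S (bigD1 i) //=.
  have : 0 <= \sum_(j < n | j != i) s j ^+ 2 by apply: sumr_ge0 => j _; exact: sqr_ge0.
  lra.
have [K hK] : {K : 'I_n -> R & forall i, 0 <= K i /\ forall rho, 0 <= rho ->
    (centered_gauss1 (s i) [set y | (rho <= y ^+ 2)%R] <=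
     (K i * expR (- (rho / (4 * S))))%:E)%E}.
  apply: (@choice _ _ (fun i k => 0 <= k /\ forall rho, 0 <= rho ->
    (centered_gauss1 (s i) [set y | (rho <= y ^+ 2)%R] <=
     (k * expR (- (rho / (4 * S))))%:E)%E)).
  move=> i; have [k k0 hk] := @tailG R _ _ (hs i).1 (sS i); by exists k.
pose J := (normal_peak (Num.sqrt cX^-1))^-1.
have J0 : 0 <= J by rewrite invr_ge0 normal_peak_ge0.
pose K1 := CX * J ^+ n.
have K10 : 0 <= K1 by rewrite mulr_ge0 ?exprn_ge0// ltW.
pose Ks := \sum_(i < n) K i.
have Ks0 : 0 <= Ks by apply: sumr_ge0 => i _; exact: (hK i).1.
pose M := 36 * n.+1%:R * S.
have M36 : 36 <= M.
  rewrite /M -mulrA ler_peMr// (le_trans S1)// ler_peMl// ?(le_trans ler01 S1)//.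
  by rewrite ler1n.
pose C := 1 + K1 + Ks + M * (1 + cX).
have hMc : 36 * (1 + cX) <= M * (1 + cX) by rewrite ler_wpM2r// ?addr_ge0// ltW.
have C0 : 0 < C by rewrite /C; lra.
exists C => // a.
pose t2 := sqdist a m.
pose r := t2 / 9.
have t20 : 0 <= t2 by exact: sqdist_ge0.
have r0 : 0 <= r by rewrite divr_ge0.
pose EA := X @^-1` [set x | (r <= sqdist x m)%R].
pose B := [set y : R | (r / n.+1%:R <= y ^+ 2)%R].
pose E := fun i => (fun w => tdot (e i) (Y w)) @^-1` B.
have mB : measurable B.
  apply: (@measurable_ge_fun _ _ R (fun y : R => y ^+ 2)).
  exact: measurable_funX.
have mEA : measurable EA.
  apply: (@measurable_ge_fun _ _ R (fun w => sqdist (X w) m)).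
  by have := measurableT_comp (@measurable_sqdist R n m) mX.
have mE i : measurable (E i).
  apply: (@measurable_ge_fun _ _ R (fun w => tdot (e i) (Y w) ^+ 2)).
  rewrite (_ : (fun w => tdot (e i) (Y w) ^+ 2) = (fun w => tnth (Y w) i ^+ 2)).
    apply: measurable_funX; by have := measurableT_comp (@measurable_tnth _ _ _ i) mY.
  by apply/funext => w; rewrite tdot_e.
apply: (le_trans (@le_int_nonmeas _ _ _ P _ (fun w => ((expR (- r))%:E + (\1_EA w)%:E
     + \sum_(i < n) (\1_(E i) w)%:E)%E) _ _)).
- by move=> w; rewrite lee_fin expR_ge0.
- move=> w; rewrite sumEFin -!EFinD lee_fin !indicE.
  have -> : (w \in EA) = (r <= sqdist (X w) m).
    by apply/idP/idP => [/set_mem|/mem_set].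
  have -> : \sum_(i < n) (w \in E i)%:R =
      \sum_(i < n) ((r / n.+1%:R <= tnth (Y w) i ^+ 2)%R%:R : R).
    apply: eq_bigr => i _.
    have -> : (w \in E i) = (r / n.+1%:R <= tnth (Y w) i ^+ 2)%R; last by [].
    apply/idP/idP => [/set_mem|H]; first by rewrite /E /B /= tdot_e.
    by apply/mem_set; rewrite /E /B /= tdot_e.
  exact: pointwise.
have mI (A : set Omega) : measurable A -> measurable_fun setT (fun w : Omega => (\1_A w)%:E : \bar R).
  by move=> mA; apply: measurableT_comp => //; exact: measurable_indic.
have I0 (A : set Omega) (w : Omega) : (0 <= (\1_A w)%:E :> \bar R)%E by rewrite lee_fin indicE ler0n.
have mS : measurable_fun setT (fun w : Omega => \sum_(i < n) (\1_(E i) w)%:E : \bar R).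
  by apply: emeasurable_sum => i; exact: mI.
have S0 (w : Omega) : (0 <= \sum_(i < n) (\1_(E i) w)%:E :> \bar R)%E.
  by apply: sume_ge0 => i _.
rewrite ge0_integralD//; last 2 first.
- by move=> w _; rewrite adde_ge0// lee_fin expR_ge0.
- by apply: emeasurable_funD => //; exact: mI.
rewrite ge0_integralD//; last exact: mI.
rewrite integral_cst//.
rewrite [X in (X + _ + _)%E](_ : _ = (expR (- r))%:E); last first.
  by rewrite -[RHS]mule1; congr (_ * _)%E; exact: probability_setT.
rewrite integral_indic// setIT.
rewrite ge0_integral_sum//; last by move=> i; exact: mI.
under eq_bigr do rewrite integral_indic// setIT.
have hA : (P EA <= (CX * expR (- (cX * r / 2)) * J ^+ n)%:E)%E.
  exact: (@tailX R d Omega P n X cX CX cX0 CX0 m pX hdens hbound r).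
have hE i : (P (E i) <= (K i * expR (- (r / n.+1%:R / (4 * S))))%:E)%E.
  by rewrite (hs i).2 //; apply: (hK i).2; rewrite divr_ge0// ler0n.
apply: (le_trans (leeD (leeD (lexx _) hA) (lee_sum _ (fun i _ => hE i)))).
rewrite sumEFin -!EFinD lee_fin -/t2.
pose E0 := expR (- (cX / C) * t2).
have E00 : 0 <= E0 := expR_ge0 _.
have key q : 0 < q -> cX * q <= C -> expR (- (t2 / q)) <= E0.
  move=> q0 hq; rewrite ler_expR mulNr lerN2.
  have h : cX / C <= q^-1.
    by rewrite ler_pdivrMr// mulrC ler_pdivlMr// mulrC.
  by rewrite [t2 / q]mulrC; exact: ler_wpM2r.
have e1 : expR (- r) <= E0 by apply: key => //; rewrite /C; lra.
have e2 : expR (- (cX * r / 2)) <= E0.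
  have -> : cX * r / 2 = t2 / (18 / cX) by rewrite /r; field; rewrite gt_eqF.
  apply: key; first by rewrite divr_gt0.
  rewrite mulrC divfK ?gt_eqF//; rewrite /C; lra.
have e3 i : expR (- (r / n.+1%:R / (4 * S))) <= E0.
  have Spos : 0 < S by lra.
  have -> : r / n.+1%:R / (4 * S) = t2 / M.
    by rewrite /r /M; field; rewrite ?gt_eqF ?ltr0Sn.
  apply: key; first by lra.
  rewrite /C; lra.
have h2 : CX * expR (- (cX * r / 2)) * J ^+ n <= K1 * E0.
  by rewrite /K1 mulrAC; apply: ler_wpM2l.
have h3 : \sum_(i < n) K i * expR (- (r / n.+1%:R / (4 * S))) <= Ks * E0.
  rewrite /Ks mulr_suml; apply: ler_sum => i _.
  by apply: ler_wpM2l; [exact: (hK i).1 | exact: e3].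
have M0 : 0 <= M by lra.
have h4 : 0 <= M * (1 + cX) * E0 by rewrite mulr_ge0// mulr_ge0//; lra.
apply: le_trans (lerD (lerD e1 h2) h3) _.
rewrite /C mulrDl -[X in X <= _]addr0; apply: lerD => //.
by rewrite !mulrDl mul1r.
Qed.
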